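(* Let $n>p\ge 2$ and consider the linear model $\mathbf{y}=\mathbf{X}\boldsymbol{\beta}+\boldsymbol{\varepsilon}$, where $\mathbf{X}=[\mathbf{x}_1,\dots,\mathbf{x}_p]$ is a known $n\times p$ matrix with linearly independent columns, each column having mean $0$ and Euclidean length $1$, $\boldsymbol{\beta}=(\beta_1,\dots,\beta_p)^T$ is unknown, and $E(\boldsymbol{\varepsilon})=\mathbf{0}$, $\mathrm{var}(\boldsymbol{\varepsilon})=\mathbf{I}$. Suppose there is a constant $r>0$ with $\mathrm{corr}(\mathbf{x}_i,\mathbf{x}_j)=r$ for all $i\ne j$. Let $\hat{\boldsymbol{\beta}}=(\mathbf{X}^T\mathbf{X})^{-1}\mathbf{X}^T\mathbf{y}$, and for $\mathbf{w}$ in the simplex $W=\{\mathbf{w}\in\mathbb{R}^p: w_i\ge0,\ \sum_i w_i=1\}$ write $\mathrm{var}(\hat{\xi}(\mathbf{w}),r)$ for the variance of $\mathbf{w}^T\hat{\boldsymbol{\beta}}$ (which depends only on $p$, $r$ and $\mathbf{w}$). Let $\mathbf{w}_0=(1/p,\dots,1/p)^T$ and $\hat\tau_a=\mathbf{w}_0^T\hat{\boldsymbol\beta}=\frac1p\sum_{i=1}^p\hat\beta_i$, the estimator of the average group effect $\tau_a=\frac1p\sum_{i=1}^p\beta_i$. Then for each fixed $r$, $$\mathrm{var}(\hat{\tau}_a,r)=\mathrm{var}(\hat{\xi}(\mathbf{w}_0),r)=\min_{\mathbf{w}\in W}\mathrm{var}(\hat{\xi}(\mathbf{w}),r).$$ Also,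 $\mathrm{var}(\hat{\tau}_a,r)$, as a function of $r\in(0,1)$, is strictly monotone decreasing with $\lim_{r\to1}\mathrm{var}(\hat{\tau}_a,r)=1/p^2$. Further, among the variances $\mathrm{var}(\hat{\xi}(\mathbf{w}),r)$, $\mathbf{w}\in W$, the variance $\mathrm{var}(\hat{\tau}_a,r)$ is the only one that remains bounded as $r\to1$; i.e., for every fixed $\mathbf{w}\in W$ with $\mathbf{w}\ne\mathbf{w}_0$, $\mathrm{var}(\hat{\xi}(\mathbf{w}),r)$ is unbounded as $r\to 1$.
   Context: The variance of $\mathbf{w}^T\hat{\boldsymbol\beta}$ in this model equals $\mathbf{w}^T(\mathbf{X}^T\mathbf{X})^{-1}\mathbf{w}$, where $\mathbf{X}^T\mathbf{X}$ has $1$ on the diagonal and $r$ off the diagonal; hence it is a function of $p$, $r$ and $\mathbf{w}$ only. *)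

(* Defs.v *)
From HB Require Import structures.
From mathcomp Require Import all_boot all_order all_algebra.
From mathcomp Require Import all_classical all_reals all_analysis.
Set Implicit Arguments. Unset Strict Implicit. Unset Printing Implicit Defensive.
Import Order.TTheory GRing.Theory Num.Theory.
Local Open Scope ring_scope.

(* X^T X for the equicorrelated standardized design: 1 on the diagonal,
   r off the diagonal. *)
Definition gram (R : realType) (p : nat) (r : R) : 'M[R]_p :=
  \matrix_(i < p, j < p) (if i == j then 1 else r).

(* var(xi_hat(w), r) = w^T (X^T X)^{-1} w  (var(eps) = I). *)
Definition var_xi (R : realType) (p : nat) (r : R) (w : 'cV[R]_p) : R :=
  (w^T *m invmx (gram p r) *m w) ord0 ord0.

Definition in_simplex (R : realType) (p : nat) (w : 'cV[R]_p) : Prop :=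
  (forall i, 0 <= w i ord0) /\ \sum_(i < p) w i ord0 = 1.

Definition w0 (R : realType) (p : nat) : 'cV[R]_p := const_mx (p%:R)^-1.

Definition var_tau (R : realType) (p : nat) (r : R) : R := var_xi r (w0 R p).

(* Main.v *)
Require Import Defs.
From HB Require Import structures.
From mathcomp Require Import all_boot all_order all_algebra.
From mathcomp Require Import all_classical all_reals all_analysis.
From mathcomp Require Import ring lra.
Import Order.TTheory GRing.Theory Num.Theory.
Import numFieldNormedType.Exports.
Local Open Scope ring_scope.
Local Open Scope classical_set_scope.

Section Alg.
Variables (R : realType) (p : nat).
Let J : 'M[R]_p := const_mx 1.

Lemma gramE (r : R) : gram p r = (1 - r) *: 1%:M + r *: J.
Proof.
apply/matrixP=> i j; rewrite !mxE; case: eqP => _ /=; rewrite ?mulr1 ?mulr0; lra.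
Qed.

Lemma JJ : J *m J = p%:R *: J.
Proof.
apply/matrixP=> i j; rewrite !mxE.
under eq_bigr do rewrite !mxE mulr1.
by rewrite sumr_const card_ord mulr1.
Qed.

Definition cc (r : R) := r / (1 + (p%:R - 1) * r).
Definition Binv (r : R) : 'M[R]_p := (1 - r)^-1 *: (1%:M - cc r *: J).

Lemma gramB (r : R) : 0 < r < 1 -> gram p r *m Binv r = 1%:M.
Proof.
move=> /andP[r0 r1].
have d0 : 1 + (p%:R - 1) * r != 0 :> R.
  have : (0:R) <= p%:R by apply: ler0n.
  move=> hP; apply/lt0r_neq0; nra.
rewrite gramE /Binv -scalemxAr mulmxDl !mulmxBr -!scalemxAl -!scalemxAr.
rewrite !mul1mx !mulmx1 JJ.
apply/matrixP=> i j; rewrite !mxE.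
case: eqP => _ /=; rewrite ?mulr1n ?mulr0n /cc; field; rewrite ?d0; lra.
Qed.

Lemma invgram (r : R) : 0 < r < 1 -> invmx (gram p r) = Binv r.
Proof.
move=> hr; have h := gramB r hr; have [u _] := mulmx1_unit h.
by rewrite -[invmx _]mulmx1 -h mulmxA mulVmx // mul1mx.
Qed.

Definition sq (w : 'cV[R]_p) := \sum_i w i ord0 ^+ 2.
Definition sm (w : 'cV[R]_p) := \sum_i w i ord0.

Lemma var_xiE (r : R) w : 0 < r < 1 ->
  var_xi r w = (sq w - cc r * sm w ^+ 2) / (1 - r).
Proof.
move=> hr; rewrite /var_xi (invgram r hr) /Binv -scalemxAr -scalemxAl mxE.
rewrite mulmxBr mulmx1 -scalemxAr mulmxBl -scalemxAl !mxE mulrC; congr (_ * _).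
congr (_ - _ * _).
  rewrite /sq; apply: eq_bigr => i _; rewrite !mxE; by rewrite expr2.
rewrite /sm expr2 mulr_suml; apply: eq_bigr => i _; rewrite !mxE mulrC; congr (_ * _).
by apply: eq_bigr => k _; rewrite !mxE mulr1.
Qed.

Hypothesis p0 : (0 < p)%N.
Let P : R := p%:R.
Lemma P0 : P != 0. Proof. by rewrite pnatr_eq0 -lt0n. Qed.
Lemma Pgt0 : 0 < P. Proof. by rewrite ltr0n. Qed.

Definition gg (r : R) := (P * (1 + (P - 1) * r))^-1.

Lemma w0_simplex : in_simplex (w0 R p).
Proof.
split=> [i|]; first by rewrite mxE invr_ge0 ler0n.
under eq_bigr do rewrite mxE.
by rewrite sumr_const card_ord -(mulr_natr (p%:R^-1)) mulVf ?P0.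
Qed.

Lemma sq_dev w : in_simplex w -> sq w - P^-1 = \sum_i (w i ord0 - P^-1) ^+ 2.
Proof.
move=> [_ hs].
have -> : \sum_i (w i ord0 - P^-1) ^+ 2 = sq w - 2 * P^-1 * sm w + P * P^-1 ^+ 2.
  rewrite /sq /sm mulr_sumr -sumrB.
  have -> : P * P^-1 ^+ 2 = \sum_(i < p) P^-1 ^+ 2.
    by rewrite sumr_const card_ord -mulr_natl.
  rewrite -big_split /=; apply: eq_bigr => i _; ring.
rewrite /sm hs; have := P0; move=> hP; by field.
Qed.

Lemma var_simplex (r : R) w : 0 < r < 1 -> in_simplex w ->
  var_xi r w = (sq w - P^-1) / (1 - r) + gg r.
Proof.
move=> hr hw; rewrite var_xiE //.
have [_ hs] := hw; rewrite /sm hs.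
move: hr => /andP[r0 r1].
have d0 : 1 + (P - 1) * r != 0.
  have hP := Pgt0; apply/lt0r_neq0; nra.
have := P0 => hP.
rewrite /gg /cc /P; field; rewrite ?d0 ?hP //; lra.
Qed.

Lemma sq_w0 : sq (w0 R p) = P^-1.
Proof.
rewrite /sq; under eq_bigr do rewrite mxE.
rewrite sumr_const card_ord -mulr_natl -/P; have := P0 => hP; by field.
Qed.

Lemma var_tauE (r : R) : 0 < r < 1 -> var_tau p r = gg r.
Proof.
move=> hr; rewrite /var_tau var_simplex //; last exact: w0_simplex.
by rewrite sq_w0 subrr mul0r add0r.
Qed.
End Alg.
Lemma lim_gg (R : realType) (p : nat) : (0 < p)%N ->
  gg R p r @[r --> (1:R)] --> gg R p 1.
Proof.
move=> p0; rewrite /gg.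
have hP : (p%:R : R) != 0 by rewrite pnatr_eq0 -lt0n.
apply: cvgV; first by rewrite mulr1 addrC subrK mulf_neq0.
apply: cvgMl_tmp.
apply: cvgD; first exact: cvg_cst.
apply: cvgMl_tmp; exact: cvg_id.
Qed.

Theorem corollary2 (R : realType) (n p : nat) (hnp : (p < n)%N) (hp : (2 <= p)%N) :
  (forall r : R, 0 < r < 1 ->
     in_simplex (w0 R p) /\
     forall w : 'cV[R]_p, in_simplex w -> var_tau p r <= var_xi r w)
  /\
  (forall r1 r2 : R, 0 < r1 -> r1 < r2 -> r2 < 1 -> var_tau p r2 < var_tau p r1)
  /\
  (var_tau p r @[r --> (1:R)^'-] --> (((p%:R : R) ^+ 2)^-1 : R))
  /\
  (forall w : 'cV[R]_p, in_simplex w -> w != w0 R p ->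
     ~ (exists M : R, \forall r \near (1:R)^'-, var_xi r w <= M)).
Proof.
have p0 : (0 < p)%N by apply: leq_trans hp.
have hP : 1 < (p%:R : R) by rewrite ltr1n.
have Pne : (p%:R : R) != 0 by rewrite pnatr_eq0 -lt0n.
have gpos : forall r : R, 0 < r < 1 -> 0 < gg R p r.
  move=> r /andP[r0 r1]; rewrite /gg invr_gt0; apply: mulr_gt0; nra.
split.
  move=> r hr; split; first exact: w0_simplex.
  move=> w hw; rewrite (var_tauE _ _ p0 _ hr) (var_simplex _ _ p0 _ _ hr hw) lerDr.
  move: hr => /andP[r0 r1].
  apply: divr_ge0; last lra.
  rewrite (sq_dev _ _ p0 _ hw); apply: sumr_ge0 => i _; exact: sqr_ge0.
split.
  move=> r1 r2 h1 h12 h2.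
  have hr1 : 0 < r1 < 1 by apply/andP; split => //; lra.
  have hr2 : 0 < r2 < 1 by apply/andP; split => //; lra.
  rewrite (var_tauE _ _ p0 _ hr1) (var_tauE _ _ p0 _ hr2) /gg ltf_pV2 ?posrE; try (apply: mulr_gt0; nra).
  rewrite ltr_pM2l; [nra|lra].
split.
  have -> : ((p%:R : R) ^+ 2)^-1 = gg R p 1.
    by rewrite /gg mulr1 addrC subrK expr2.
  apply: cvg_trans; last exact: (cvg_at_left_filter (lim_gg _ _ p0)).
  apply: near_eq_cvg; near=> r.
  rewrite (var_tauE _ _ p0) //; apply/andP; split.
    near: r; apply: nbhs_left_gt; lra.
  near: r; exact: nbhs_left_lt.
move=> w hw hne [M hM].
set d := sq R p w - (p%:R)^-1.
have dpos : 0 < d.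
  have s0 : 0 <= \sum_i (w i ord0 - (p%:R : R)^-1) ^+ 2.
    by apply: sumr_ge0 => i _; exact: sqr_ge0.
  rewrite /d (sq_dev _ _ p0 _ hw) lt_neqAle s0 andbT.
  apply/eqP => /esym /psumr_eq0P h.
  move/eqP: hne; apply; apply/matrixP => i j; rewrite (ord1 j) mxE.
  by apply/eqP; rewrite -subr_eq0 -sqrf_eq0; apply/eqP; apply: h => // k _; exact: sqr_ge0.
have Mp : 0 < `|M| + 1 by have := normr_ge0 M; lra.
set e := d / (`|M| + 1).
have epos : 0 < e by apply: divr_gt0.
have : \forall r \near (1:R)^'-, [/\ 0 < r, r < 1, var_xi r w <= M & 1 - r < e].
  near=> r; split.
  - near: r; apply: nbhs_left_gt; lra.
  - near: r; exact: nbhs_left_lt.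
  - near: r; exact: hM.
  - near: r; exact: nbhs_left_ltBl.
move=> /filter_ex [r [r0 r1 hv hre]].
have hr : 0 < r < 1 by apply/andP.
rewrite (var_simplex _ _ p0 _ _ hr hw) -/d in hv.
have g0 := gpos r hr.
have hM1 : M <= `|M| := ler_norm M.
have : d / (1 - r) > `|M| + 1.
  rewrite ltr_pdivlMr; last lra.
  have : (1 - r) * (`|M| + 1) < e * (`|M| + 1).
    by rewrite ltr_pM2r.
  rewrite /e mulfVK; first by rewrite mulrC.
  by rewrite gt_eqF.
lra.
Unshelve. all: end_near.
Qed.
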